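(* Let $A$ be a Banach algebra with a bounded left approximate identity, let $X$ be a Banach space, and let $\varphi\colon A\to\mathcal{B}(X)$ be a representation. If for every $x\in X$ the orbit map $A\to X$, $a\mapsto\varphi(a)x$, is weakly compact, then the essential space of $\varphi$ is complemented in $X$.
   Context: A representation is a bounded linear multiplicative map. The essential space of $\varphi$ is the closed linear span of $\{\varphi(a)x: a\in A, x\in X\}$. A closed subspace is complemented if it is the image of some bounded idempotent operator on $X$. *)

(* Defs.v *)
From HB Require Import structures.
From mathcomp Require Import all_boot all_order all_algebra complex.
From mathcomp Require Import all_classical all_reals all_analysis.
Import Order.TTheory GRing.Theory Num.Theory numFieldNormedType.Exports.
Set Implicit Arguments.
Unset Strict Implicit.
Unset Printing Implicit Defensive.
Local Open Scope classical_set_scope.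
Local Open Scope ring_scope.

Section Defs.
Variable R : realType.
Local Notation C := (R[i]).

Definition banach_algebra_mul (A : completeNormedModType C) (mul : A -> A -> A) : Prop :=
  [/\ (forall a b c, mul (mul a b) c = mul a (mul b c)),
      (forall k a b c, mul (k *: a + b) c = k *: mul a c + mul b c),
      (forall k a b c, mul a (k *: b + c) = k *: mul a b + mul a c)
    & (forall a b, `|mul a b| <= `|a| * `|b|)].

Definition has_blai (A : completeNormedModType C) (mul : A -> A -> A) : Prop :=
  exists (I : Type) (le : I -> I -> Prop) (e : I -> A) (M : C),
    inhabited I /\
    (forall i, le i i) /\
    (forall i j k, le i j -> le j k -> le i k) /\
    (forall i j, exists k, le i k /\ le j k) /\
    (forall i, `|e i| <= M) /\
    (forall a (eps : C), 0 < eps ->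
           exists i0, forall i, le i0 i -> `|mul (e i) a - a| < eps).

Definition representation (A : completeNormedModType C) (mul : A -> A -> A)
  (X : completeNormedModType C) (phi : A -> X -> X) : Prop :=
  [/\ (forall a k x y, phi a (k *: x + y) = k *: phi a x + phi a y),
      (forall k a b x, phi (k *: a + b) x = k *: phi a x + phi b x),
      (forall a b x, phi (mul a b) x = phi a (phi b x))
    & (exists M : C, forall a x, `|phi a x| <= M * `|a| * `|x|)].

Definition is_cont_lin_functional (W : normedModType C) (f : W -> C^o) : Prop :=
  (forall k x y, f (k *: x + y) = k *: f x + f y) /\ continuous f.

Definition dual (W : normedModType C) := {f : W -> C^o | is_cont_lin_functional f}.

Definition weak_eval (W : normedModType C) (w : W) : {ptws dual W -> C^o} :=
  fun f => proj1_sig f w.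

(* W equipped with its weak topology sigma(W, W^* ) *)
Definition weakT (W : normedModType C) := initial_topology (@weak_eval W).

Definition rel_weakly_compact (W : normedModType C) (S : set W) : Prop :=
  @compact (weakT W) (@closure (weakT W) S).

Definition weakly_compact_op (V W : normedModType C) (T : V -> W) : Prop :=
  rel_weakly_compact (T @` [set v : V | `|v| <= 1]).

Definition lin_span (W : normedModType C) (S : set W) : set W :=
  [set w | exists (n : nat) (c : 'I_n -> C) (v : 'I_n -> W),
             (forall i, S (v i)) /\ w = \sum_(i < n) c i *: v i].

Definition essential_space (A : completeNormedModType C)
  (X : completeNormedModType C) (phi : A -> X -> X) : set X :=
  closure (lin_span [set phi a x | a in [set: A] & x in [set: X]]).

Definition complemented (W : normedModType C) (E : set W) : Prop :=
  exists P : W -> W,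
    [/\ (forall k x y, P (k *: x + y) = k *: P x + P y),
        (exists M : C, forall x, `|P x| <= M * `|x|),
        (forall x, P (P x) = P x)
      & range P = E].

End Defs.

(* Main.v *)
Require Import Defs.
From HB Require Import structures.
From mathcomp Require Import all_boot all_order all_algebra complex.
From mathcomp Require Import all_classical all_reals all_analysis.
Import Order.TTheory GRing.Theory Num.Theory numFieldNormedType.Exports.
Set Implicit Arguments.
Unset Strict Implicit.
Unset Printing Implicit Defensive.
Local Open Scope classical_set_scope.
Local Open Scope ring_scope.
Local Open Scope complex_scope.
From mathcomp Require Import lra.
Section HahnBanach.
Variables (R : realType) (V : lmodType R) (p : V -> R).
Hypothesis p_add : forall x y, p (x + y) <= p x + p y.
Hypothesis p_hom : forall (r : R) x, 0 <= r -> p (r *: x) = r * p x.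

Lemma p0 : p 0 = 0.
Proof. by rewrite -(scale0r (0:V)) p_hom // mul0r. Qed.

Definition valid (pr : set V * (V -> R)) :=
  [/\ pr.1 0,
      (forall (r : R) x y, pr.1 x -> pr.1 y -> pr.1 (r *: x + y) /\
          pr.2 (r *: x + y) = r * pr.2 x + pr.2 y)
    & (forall x, pr.1 x -> pr.2 x <= p x)].

Definition ext (s t : set V * (V -> R)) :=
  s.1 `<=` t.1 /\ (forall x, s.1 x -> s.2 x = t.2 x).

Lemma valid_lin pr : valid pr -> forall r x y, pr.1 x -> pr.1 y ->
  pr.2 (r *: x + y) = r * pr.2 x + pr.2 y.
Proof. by case=> _ H _ r x y Hx Hy; case: (H r x y Hx Hy). Qed.

Lemma valid_mem pr : valid pr -> forall r x y, pr.1 x -> pr.1 y -> pr.1 (r *: x + y).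
Proof. by case=> _ H _ r x y Hx Hy; case: (H r x y Hx Hy). Qed.

Lemma valid_g0 pr : valid pr -> pr.2 0 = 0.
Proof.
move=> v; case: (v) => H0 _ _.
have := valid_lin v 1 H0 H0; rewrite scale1r addr0 mul1r => E.
by apply: (@addrI _ (pr.2 0)); rewrite addr0 -E.
Qed.

Lemma valid_add pr x y : valid pr -> pr.1 x -> pr.1 y -> pr.2 (x + y) = pr.2 x + pr.2 y.
Proof. by move=> v Hx Hy; have := valid_lin v 1 Hx Hy; rewrite scale1r mul1r. Qed.

Lemma valid_scale pr r x : valid pr -> pr.1 x -> pr.2 (r *: x) = r * pr.2 x.
Proof.
move=> v Hx; case: (v) => H0 _ _.
by have := valid_lin v r Hx H0; rewrite !addr0 (valid_g0 v) addr0.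
Qed.

Lemma valid_scale_mem pr r x : valid pr -> pr.1 x -> pr.1 (r *: x).
Proof. by move=> v Hx; case: (v) => H0 _ _; have := valid_mem v r Hx H0; rewrite addr0. Qed.

Section Ext.
Variables (D : set V) (g : V -> R) (x1 : V) (c : R).
Hypothesis vD : valid (D, g).
Hypothesis x1D : ~ D x1.
Hypothesis c1 : forall d, D d -> g d + c <= p (d + x1).
Hypothesis c2 : forall d, D d -> g d - c <= p (d - x1).

Let gsc r x : D x -> g (r *: x) = r * g x.
Proof. exact: (valid_scale r vD). Qed.
Let Dsc r x : D x -> D (r *: x).
Proof. exact: (valid_scale_mem r vD). Qed.

Definition D' := [set y | exists d t, D d /\ y = d + t *: x1].
Definition g' (y : V) : R :=
  xget 0 [set v | exists d t, [/\ D d, y = d + t *: x1 & v = g d + t * c]].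

Lemma uniq_rep d t d' t' : D d -> D d' -> d + t *: x1 = d' + t' *: x1 -> d = d' /\ t = t'.
Proof.
move=> Hd Hd' E.
have Et : t = t'.
  apply/eqP; apply: contraT => ntt; exfalso; apply: x1D.
  have -> : x1 = (t - t')^-1 *: (d' - d).
    have : (t - t') *: x1 = d' - d.
      have E2 : t *: x1 = d' + t' *: x1 - d by rewrite -E addrC addKr.
      by rewrite scalerBl E2 addrAC addrK.
    move=> <-; rewrite scalerA mulVf ?scale1r // subr_eq0 //.
  apply: (valid_scale_mem _ vD).
  by have := valid_mem vD (-1) Hd Hd'; rewrite scaleN1r addrC.
by split => //; move: E; rewrite Et => /addIr.
Qed.

Lemma g'E d t : D d -> g' (d + t *: x1) = g d + t * c.
Proof.
move=> Hd; rewrite /g'; apply: xget_unique; first by exists d, t.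
by move=> y [d2 [t2 [Hd2 E ->]]]; case: (uniq_rep Hd Hd2 E) => -> ->.
Qed.

Lemma valid_ext : valid (D', g').
Proof.
case: (vD) => H0 Hl Hp; split => /=.
- by exists 0, 0; rewrite scale0r addr0.
- move=> r _ _ [d [t [Hd ->]]] [d2 [t2 [Hd2 ->]]].
  have E : r *: (d + t *: x1) + (d2 + t2 *: x1) = (r *: d + d2) + (r * t + t2) *: x1.
    by rewrite scalerDr scalerA scalerDl; rewrite addrACA.
  rewrite E; split; first by exists (r *: d + d2), (r * t + t2); split => //; exact: (valid_mem vD).
  rewrite !g'E //; last exact: (valid_mem vD).
  have /= -> := valid_lin vD r Hd Hd2.
  by rewrite mulrDl mulrDr mulrA; rewrite addrACA.
- move=> _ [d [t [Hd ->]]]; rewrite g'E //.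
  have [t0|tn0] := eqVneq t 0.
    by rewrite t0 mul0r addr0 scale0r addr0; apply: Hp.
  have [tp|tn] := ltrP 0 t.
    have Hd' : D (t^-1 *: d) by apply: Dsc.
    have := c1 Hd'; rewrite gsc // => H.
    have -> : d + t *: x1 = t *: (t^-1 *: d + x1).
      by rewrite scalerDr scalerA divff // scale1r.
    rewrite p_hom; last exact: ltW.
    have -> : g d + t * c = t * (t^-1 * g d + c).
      by rewrite mulrDr mulrA divff // mul1r.
    by rewrite ler_pM2l.
  have tlt : t < 0 by rewrite lt_neqAle tn0 tn.
  have s0 : 0 < - t by rewrite oppr_gt0.
  have Hd' : D ((- t)^-1 *: d) by apply: Dsc.
  have := c2 Hd'; rewrite gsc // => H.
  have -> : d + t *: x1 = (- t) *: ((- t)^-1 *: d - x1).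
    rewrite scalerDr scalerA divff ?oppr_eq0 // scale1r scalerN scaleNr opprK //.
  rewrite p_hom; last exact: ltW.
  have -> : g d + t * c = (- t) * ((- t)^-1 * g d - c).
    by rewrite mulrDr mulrA divff ?oppr_eq0 // mul1r mulrN mulNr opprK.
  by rewrite ler_pM2l.
Qed.

Lemma ext_ext : ext (D, g) (D', g').
Proof.
split => /= x Hx; first by exists x, 0; rewrite scale0r addr0.
by have := g'E 0 Hx; rewrite scale0r addr0 mul0r addr0 => ->.
Qed.

Lemma D'x1 : D' x1.
Proof. by exists 0, 1; rewrite scale1r add0r; split => //; case: vD. Qed.
End Ext.

Lemma exists_c D g x1 : valid (D, g) ->
  exists c, (forall d, D d -> g d + c <= p (d + x1)) /\
            (forall d, D d -> g d - c <= p (d - x1)).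
Proof.
move=> vD; case: (vD) => /= H0 _ Hp.
pose S := [set v | exists d, D d /\ v = g d - p (d - x1)].
have ub : forall d', D d' -> ubound S (p (d' + x1) - g d').
  move=> d' Hd' _ [d [Hd ->]].
  rewrite lerBrDr addrAC lerBlDr -(valid_add vD) //.
  apply: le_trans (Hp _ _) _; first by have := valid_mem vD 1 Hd Hd'; rewrite scale1r.
  by rewrite addrC; apply: le_trans (p_add _ _); rewrite addrACA subrr addr0 addrC.
have nS : S !=set0 by exists (g 0 - p (0 - x1)), 0.
exists (sup S); split.
- move=> d Hd; rewrite -lerBrDl; exact: ge_sup nS (ub d Hd).
- move=> d Hd; rewrite lerBlDl -lerBlDr.
  apply: sup_upper_bound; first by split => //; exists (p (0 + x1) - g 0); exact: ub.
  by exists d.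
Qed.

Lemma ext_trans a b c : ext a b -> ext b c -> ext a c.
Proof.
move=> [s1 e1] [s2 e2]; split; first exact: subset_trans s2.
by move=> x Hx; rewrite e1 // e2 //; apply: s1.
Qed.

Theorem hahn_banach (b : set V * (V -> R)) : valid b ->
  exists u : V -> R, [/\ (forall r x y, u (r *: x + y) = r * u x + u y),
     (forall x, u x <= p x) & (forall x, b.1 x -> u x = b.2 x)].
Proof.
move=> vb.
pose T := {pr : set V * (V -> R) | valid pr /\ ext b pr}.
pose Rl := fun s t : T => `[< ext (sval s) (sval t) >].
have t0 : T by exists b; split => //; split => // x.
have [|||t tmax] := @ZL_preorder T t0 Rl.
- by move=> t; apply/asboolP; split => // x.
- by move=> r s t /asboolP H1 /asboolP H2; apply/asboolP; exact: ext_trans H1 H2.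
- move=> A Atot.
  have [[a0 Aa0]|nA] := pselect (exists a, A a); last first.
    by exists t0 => s As; exfalso; apply: nA; exists s.
  pose DU := [set x | exists a, A a /\ (sval a).1 x].
  pose gU := fun x => xget 0 [set v | exists a, [/\ A a, (sval a).1 x & v = (sval a).2 x]].
  have cmp : forall a a' x, A a -> A a' -> (sval a).1 x -> (sval a').1 x ->
      (sval a).2 x = (sval a').2 x.
    move=> a a' x Ha Ha' Hx Hx'; case: (Atot a a' Ha Ha') => /asboolP [_ E].
      exact: E.
    by rewrite E.
  have gUE : forall a x, A a -> (sval a).1 x -> gU x = (sval a).2 x.
    move=> a x Ha Hx; apply: xget_unique; first by exists a.
    by move=> y [a' [Ha' Hx' ->]]; apply: cmp.
  have big2 : forall a a', A a -> A a' -> exists a'', [/\ A a'', ext (sval a) (sval a'')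
      & ext (sval a') (sval a'')].
    move=> a a' Ha Ha'; case: (Atot a a' Ha Ha') => /asboolP E.
      by exists a'; split => //; split => // x.
    by exists a; split => //; split => // x.
  have vU : valid (DU, gU).
    split => /=.
    - exists a0; split => //; by case: (svalP a0) => [[]].
    - move=> r x y [a [Ha Hx]] [a' [Ha' Hy]].
      have [a'' [Ha'' [s1 _] [s2 _]]] := big2 a a' Ha Ha'.
      have va := proj1 (svalP a'').
      have Hm := valid_mem va r (s1 _ Hx) (s2 _ Hy).
      split; first by exists a''.
      rewrite (gUE a'' (r *: x + y) Ha'' Hm) (gUE a'' x Ha'' (s1 _ Hx)) (gUE a'' y Ha'' (s2 _ Hy)).
      exact: (valid_lin va r (s1 _ Hx) (s2 _ Hy)).
    - move=> x [a [Ha Hx]]; rewrite (gUE a) //.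
      by case: (proj1 (svalP a)) => _ _; apply.
  have eU : forall a, A a -> ext (sval a) (DU, gU).
    move=> a Ha; split => /= x Hx; first by exists a.
    by rewrite (gUE a).
  have ebU : ext b (DU, gU) by apply: ext_trans (proj2 (svalP a0)) (eU a0 Aa0).
  exists (exist _ (DU, gU) (conj vU ebU)) => s As; apply/asboolP; exact: eU.
- case: t tmax => [[D g] [vt ebt]] tmax.
  have DT : forall x, D x.
    move=> x; apply: contrapT => nDx.
    have [c [c1 c2]] := exists_c x vt.
    have v' := valid_ext vt nDx c1 c2.
    have e' : ext (D, g) (D' D x, g' D g x c) by apply: ext_ext.
    have eb' : ext b (D' D x, g' D g x c) by exact: ext_trans ebt e'.
    have := tmax (exist _ _ (conj v' eb')).
    have /[swap] /[apply] : Rl (exist _ (D, g) (conj vt ebt)) (exist _ _ (conj v' eb')).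
      by apply/asboolP.
    move=> /asboolP [/= sub _]; apply: nDx; apply: sub.
    by exists 0, 1; rewrite scale1r add0r; split => //; case: (vt).
  exists g; split.
  + by move=> r x y; apply: (valid_lin vt).
  + by move=> x; case: (vt) => _ _; apply.
  + by move=> x Hx; case: (ebt) => _ E; rewrite E.
Qed.

End HahnBanach.
Definition realify (R : realType) (X : lmodType R[i]) : Type := X.
HB.instance Definition _ (R : realType) (X : lmodType R[i]) :=
  GRing.Zmodule.copy (realify X) X.
Section Realify.
Variables (R : realType) (X : lmodType R[i]).
Definition rscale (r : R) (x : realify X) : realify X := (r%:C *: (x : X) : X).
Lemma rscaleA a b v : rscale a (rscale b v) = rscale (a * b) v.
Proof. by rewrite /rscale scalerA -rmorphM. Qed.
Lemma rscale1 : left_id 1 rscale.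
Proof. by move=> v; rewrite /rscale rmorph1 scale1r. Qed.
Lemma rscaleDr : right_distributive rscale +%R.
Proof. by move=> a u v; rewrite /rscale scalerDr. Qed.
Lemma rscaleDl v : {morph rscale^~ v: a b / a + b}.
Proof. by move=> a b; rewrite /rscale rmorphD scalerDl. Qed.
End Realify.
HB.instance Definition _ (R : realType) (X : lmodType R[i]) :=
  GRing.Zmodule_isLmodule.Build R (realify X) (@rscaleA R X) (@rscale1 R X)
   (@rscaleDr R X) (@rscaleDl R X).

Section CHB.
Variables (R : realType) (X : normedModType R[i]).
Local Notation C := R[i].
Lemma rcD (a b : R) : (a + b)%:C = a%:C + b%:C :> C. Proof. by rewrite rmorphD. Qed.
Lemma rcM (a b : R) : (a * b)%:C = a%:C * b%:C :> C. Proof. by rewrite rmorphM. Qed.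
Lemma rcN (a : R) : (- a)%:C = - a%:C :> C. Proof. by rewrite rmorphN. Qed.
Lemma rcB (a b : R) : (a - b)%:C = a%:C - b%:C :> C. Proof. by rewrite rmorphB. Qed.
Lemma rc0 : (0 : R)%:C = 0 :> C. Proof. by []. Qed.
Definition nr (y : X) : R := complex.Re `|y|.
Lemma normE (y : X) : `|y| = (nr y)%:C.
Proof. by rewrite /nr RRe_real // normr_real. Qed.
Lemma nr_ge0 y : 0 <= nr y.
Proof. by rewrite -ler0c -normE. Qed.
Lemma nrD y z : nr (y + z) <= nr y + nr z.
Proof. by rewrite -lecR rcD -!normE ler_normD. Qed.
Lemma nrN y : nr (- y) = nr y.
Proof. by rewrite /nr normrN. Qed.
Lemma normC_real (a : R) : `|a%:C| = `|a|%:C.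
Proof. by rewrite normc_def /= expr0n /= addr0 sqrtr_sqr. Qed.
Lemma nrZ (a : R) y : nr (a%:C *: y) = `|a| * nr y.
Proof. by apply: complexI; rewrite rcM -!normE normrZ normC_real. Qed.
Lemma nri y : nr ('i *: y) = nr y.
Proof.
rewrite /nr normrZ.
have -> : `|'i| = 1 :> C by rewrite normc_def /= expr0n /= add0r expr1n sqrtr1.
by rewrite mul1r.
Qed.

Variables (p : X -> R).
Hypothesis padd : forall x y, p (x + y) <= p x + p y.
Hypothesis phom : forall (r : R) x, 0 < r -> p (r%:C *: x) <= r * p x.
Hypothesis pbound : forall x, p x <= nr x.

Lemma p_0 : p 0 = 0.
Proof.
apply/eqP; rewrite eq_le; apply/andP; split.
  by apply: le_trans (pbound 0) _; rewrite /nr normr0.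
have := padd 0 0; rewrite addr0 => H.
by rewrite -(lerD2l (p 0)) addr0.
Qed.

Lemma phomE (r : R) x : 0 <= r -> p (r%:C *: x) = r * p x.
Proof.
rewrite le_eqVlt => /orP [/eqP <-|r0]; first by rewrite scale0r mul0r p_0.
apply/eqP; rewrite eq_le phom //=.
have ri : 0 < r^-1 by rewrite invr_gt0.
have := phom (r%:C *: x) ri; rewrite scalerA -rcM mulVf ?gt_eqF // scale1r => H.
by have := ler_wpM2l (ltW r0) H; rewrite mulrA divff ?gt_eqF // mul1r.
Qed.

Lemma Re_f (a b : R) : complex.Re (a%:C - 'i * b%:C) = a.
Proof. by rewrite /= !(mul0r, mulr0, mul1r, subr0, oppr0, addr0). Qed.

Lemma cHB (x0 : X) : exists f : X -> C,
  [/\ (forall k x y, f (k *: x + y) = k * f x + f y),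
      (forall x, `|f x| <= (2 * nr x)%:C),
      (forall x, complex.Re (f x) <= p x) & complex.Re (f x0) = p x0].
Proof.
pose V := realify X.
pose pV : V -> R := p.
have pa : forall x y : V, pV (x + y) <= pV x + pV y := padd.
have ph : forall (r : R) (x : V), 0 <= r -> pV (r *: x) = r * pV x := phomE.
have vb0 : valid pV ([set 0 : V], fun _ => 0).
  split => //=.
  - by move=> r x y -> ->; rewrite scaler0 addr0 mulr0 addr0.
  - by move=> x ->; rewrite /pV p_0.
have [b [vb bx0 bv]] : exists b : set V * (V -> R), [/\ valid pV b, b.1 x0 & b.2 x0 = p x0].
  have [->|nx0] := eqVneq x0 0.
    by exists ([set 0 : V], fun _ => 0); split => //; rewrite p_0.
  have nD : ~ [set 0 : V] x0 by move=> /= E; move: nx0; rewrite E eqxx.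
  have c1 : forall d : V, [set 0 : V] d -> (fun _ => 0) d + p x0 <= p (d + x0).
    by move=> d -> /=; rewrite !add0r.
  have c2 : forall d : V, [set 0 : V] d -> (fun _ => 0) d - p x0 <= p (d - x0).
    move=> d -> /=; rewrite !add0r.
    have := padd x0 (- x0); rewrite subrr p_0 => H.
    by rewrite -(lerD2l (p x0)) subrr; exact: H.
  exists (D' [set 0 : V] x0, g' [set 0 : V] (fun _ => 0) x0 (p x0)); split.
  - exact: (valid_ext ph vb0 nD c1 c2).
  - by exists 0, 1; rewrite scale1r add0r.
  - have := @g'E _ _ pV _ _ x0 (p x0) vb0 nD 0 1 (erefl 0); rewrite scale1r add0r mul1r add0r.
    by [].
have [u [ulin udom uagree]] := hahn_banach pa ph vb.
have uZ : forall (r : R) (x : X), u (r%:C *: x) = r * u x.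
  move=> r x; have := ulin r x 0; rewrite addr0.
  have u0 : u 0 = 0.
    have := ulin 1 0 0; rewrite scaler0 addr0 mul1r => E.
    by apply: (@addrI _ (u 0)); rewrite addr0 -E.
  by rewrite u0 addr0.
have uD : forall x y : X, u (x + y) = u x + u y.
  by move=> x y; have := ulin 1 x y; rewrite scale1r mul1r.
have uN : forall x : X, u (- x) = - u x.
  move=> x; have := uZ (-1) x; rewrite rcN scaleN1r mulN1r //.
pose f := fun x : X => (u x)%:C - 'i * (u ('i *: x))%:C.
have fD : forall x y, f (x + y) = f x + f y.
  by move=> x y; rewrite /f scalerDr !uD !rcD mulrDr opprD addrACA.
have fZ : forall (r : R) x, f (r%:C *: x) = r%:C * f x.
  move=> r x; rewrite /f.
  have -> : 'i *: (r%:C *: x) = r%:C *: ('i *: x) by rewrite !scalerA mulrC.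
  by rewrite !uZ !rcM mulrBr mulrCA.
have fi : forall x, f ('i *: x) = 'i * f x.
  move=> x; rewrite /f scalerA.
  have -> : ('i * 'i : C) = -1 by rewrite -expr2 sqr_i.
  rewrite scaleN1r uN rcN mulrN opprK mulrBr mulrA.
  have -> : ('i * 'i : C) = -1 by rewrite -expr2 sqr_i.
  by rewrite mulN1r opprK addrC.
exists f; split.
- move=> k x y; rewrite fD; congr (_ + _).
  by rewrite [k]complexE scalerDl -scalerA fD fZ fi fZ mulrDl mulrA.
- move=> x.
  have ub : forall y, `|u y| <= nr y.
    move=> y; rewrite ler_norml; apply/andP; split.
      by rewrite lerNl -uN -nrN; apply: le_trans (udom _) (pbound _).
    by apply: le_trans (udom _) (pbound _).
  rewrite /f; apply: le_trans (ler_normB _ _) _.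
  rewrite normrM.
  have -> : `|'i| = 1 :> C by rewrite normc_def /= expr0n /= add0r expr1n sqrtr1.
  rewrite mul1r !normC_real mulr2n mulrDl mul1r rcD lerD // lecR //.
  by rewrite -(nri x).
- by move=> x; rewrite /f Re_f; exact: udom.
- by rewrite /f Re_f uagree.
Qed.
End CHB.

Section Sep.
Variables (R : realType) (X : normedModType R[i]).
Local Notation C := R[i].

Lemma real_pos (eps : C) : 0 < eps -> eps = (complex.Re eps)%:C /\ 0 < complex.Re eps.
Proof.
move=> e0; have r : eps \is Num.real by apply: gtr0_real.
by split; [rewrite RRe_real | rewrite -ltcR RRe_real].
Qed.

Lemma bound_cont (f : X -> C^o) (K : R) :
  (forall k x y, f (k *: x + y) = k * f x + f y) ->
  (forall x, `|f x| <= (K * nr x)%:C) -> continuous f.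
Proof.
move=> fl fb x; apply/cvgrPdist_lt => eps eps0.
pose K' := `|K| + 1.
have K'0 : 0 < K' by rewrite /K' ltr_wpDl.
have K'C : 0 < K'%:C :> C by rewrite ltcR.
have fB : forall y, f x - f y = f (x - y).
  by move=> y; have := fl (-1) y x; rewrite scaleN1r mulN1r addrC [- f y + _]addrC => <-.
near=> y; rewrite fB; apply: le_lt_trans (fb _) _.
apply: (@le_lt_trans _ _ (K' * nr (x - y))%:C).
  by rewrite lecR ler_wpM2r ?nr_ge0 // /K' (le_trans (ler_norm _)) // lerDl.
rewrite rcM -normE.
have -> : eps = K'%:C * (eps / K'%:C) by rewrite mulrC divfK // gt_eqF.
rewrite ltr_pM2l //.
near: y; apply/nbhs_normP; exists (eps / K'%:C) => //=.
by rewrite divr_gt0.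
Unshelve. all: by end_near. Qed.

Definition mkdual (f : X -> C) (K : R)
  (fl : forall k x y, f (k *: x + y) = k * f x + f y)
  (fb : forall x, `|f x| <= (K * nr x)%:C) : dual X :=
  exist _ (f : X -> C^o) (conj fl (bound_cont fl fb)).

Lemma norming (z : X) : exists f : dual X,
  complex.Re (sval f z) = nr z /\ forall y, complex.Re (sval f y) <= nr y.
Proof.
have padd : forall x y : X, nr (x + y) <= nr x + nr y by exact: nrD.
have phom : forall (r : R) (x : X), 0 < r -> nr (r%:C *: x) <= r * nr x.
  by move=> r x r0; rewrite nrZ ger0_norm // ltW.
have [f [fl fb fre fz]] := @cHB R X (@nr R X) padd phom (fun x => lexx _) z.
by exists (mkdual fl fb).
Qed.

Lemma separate (z : X) : z != 0 -> exists f : dual X, sval f z != 0.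
Proof.
move=> nz; have [f [fz _]] := norming z; exists f.
apply: contra nz => /eqP f0; move: fz; rewrite f0 /= => /esym n0.
by rewrite -normr_eq0 normE n0; apply/eqP.
Qed.

Section Dist.
Variables (E0 : set X).
Hypothesis E00 : E0 0.
Hypothesis E0l : forall (k : C) x y, E0 x -> E0 y -> E0 (k *: x + y).

Definition dist (y : X) := inf [set nr (y - e) | e in E0].
Let ne y : [set nr (y - e) | e in E0] !=set0.
Proof. by exists (nr (y - 0)), 0. Qed.
Let lb y : lbound [set nr (y - e) | e in E0] 0.
Proof. by move=> _ [e _ <-]; exact: nr_ge0. Qed.
Let hlb y : has_lbound [set nr (y - e) | e in E0].
Proof. by exists 0; exact: lb. Qed.

Lemma dist_le y e : E0 e -> dist y <= nr (y - e).
Proof. by move=> He; apply: ge_inf; [exact: hlb | exists e]. Qed.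
Lemma dist_ge0 y : 0 <= dist y.
Proof. by apply: lb_le_inf; [exact: ne | exact: lb]. Qed.
Lemma dist_glb y v : (forall e, E0 e -> v <= nr (y - e)) -> v <= dist y.
Proof. by move=> H; rewrite /dist; apply: lb_le_inf; [exact: ne | move=> _ [e He <-]; exact: H]. Qed.
Lemma dist_bound y : dist y <= nr y.
Proof. by have := dist_le y E00; rewrite subr0. Qed.
Lemma distD x y : dist (x + y) <= dist x + dist y.
Proof.
rewrite -lerBlDr; apply: dist_glb => e1 He1.
rewrite lerBlDr [nr _ + _]addrC -lerBlDr; apply: dist_glb => e2 He2.
rewrite lerBlDr; apply: le_trans (dist_le (x + y) (E0l 1 He1 He2)) _.
rewrite scale1r [nr _ + _]addrC.
have -> : x + y - (e1 + e2) = (x - e1) + (y - e2) by rewrite opprD addrACA.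
exact: nrD.
Qed.
Lemma distZ (r : R) y : 0 < r -> dist (r%:C *: y) <= r * dist y.
Proof.
move=> r0; rewrite mulrC -ler_pdivrMr //.
apply: dist_glb => e He.
rewrite ler_pdivrMr //; apply: le_trans (dist_le _ (E0l r%:C He E00)) _.
rewrite addr0 -scalerBr nrZ ger0_norm; last exact: ltW.
by rewrite mulrC.
Qed.
Lemma dist_E0 e : E0 e -> dist e = 0.
Proof.
move=> He; apply/eqP; rewrite eq_le dist_ge0 andbT.
by apply: le_trans (dist_le e He) _; rewrite subrr /nr normr0.
Qed.
Lemma dist_pos y : ~ closure E0 y -> 0 < dist y.
Proof.
move=> ncl; rewrite lt_neqAle dist_ge0 andbT; apply/negP => /eqP d0; apply: ncl.
move=> B /nbhs_normP [eps eps0 sub].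
have [epsE epsp] := real_pos eps0.
have [_ [e He <-] lt] : exists2 v, [set nr (y - e) | e in E0] v & v < complex.Re eps.
  by apply: inf_lt (ne y) _; rewrite -/(dist y) -d0.
exists e; split => //; apply: sub; change (`|y - e| < eps); rewrite epsE normE ltcR //.
Qed.

Lemma separate_sub (z : X) : ~ closure E0 z ->
  exists f : dual X, (forall e, E0 e -> sval f e = 0) /\ sval f z != 0.
Proof.
move=> ncl.
have [f [fl fb fre fz]] := @cHB R X dist distD distZ dist_bound z.
exists (mkdual fl fb) => /=; split; last first.
  apply/eqP => f0; move: fz; rewrite f0 /= => d0.
  by have := dist_pos ncl; rewrite -d0 ltxx.
move=> e He.
have f0 : f 0 = 0.
  have := fl 1 0 0; rewrite scaler0 addr0 mul1r => E.
  by apply: (@addrI _ (f 0)); rewrite addr0 -E.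
have fZ : forall k x, f (k *: x) = k * f x by move=> k x; rewrite -[k *: x]addr0 fl f0 addr0.
have Re0 : forall x, E0 x -> complex.Re (f x) = 0.
  move=> x Hx; apply/eqP; rewrite eq_le; apply/andP; split.
    by apply: le_trans (fre x) _; rewrite dist_E0.
  have Hnx : E0 (- x) by have := E0l (-1) Hx E00; rewrite addr0 scaleN1r.
  have := fre (- x); rewrite dist_E0 // -scaleN1r fZ mulN1r.
  by case: (f x) => a b /=; rewrite oppr_le0.
have Hie : E0 ('i *: e) by have := E0l 'i He E00; rewrite addr0.
have := Re0 _ Hie; rewrite fZ; have := Re0 _ He.
case: (f e) => a b /= -> ; rewrite !(mul0r, mul1r, subr0, sub0r, oppr_eq0) => /eqP.
by rewrite oppr_eq0 => /eqP ->.
Qed.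
End Dist.
End Sep.

Section LimUniq.
Variables (R : realType) (T : Type).
Local Notation C := R[i].
Lemma lim_uniqC (F : set_system T) (PF : ProperFilter F) (g : T -> C^o) (a b : C^o) :
  g @ F --> a -> g @ F --> b -> a = b.
Proof. move=> Ha Hb; exact: (@cvg_unique _ (@norm_hausdorff _ C^o) _ _ _ _ Ha Hb). Qed.

Lemma lim_Re_le (F : set_system T) (PF : ProperFilter F) (g : T -> C^o) (L : C^o) (c : R) :
  g @ F --> L -> (forall i, complex.Re (g i) <= c) -> complex.Re L <= c.
Proof.
move=> gL gc; rewrite leNgt; apply/negP => cL.
have e0 : 0 < (complex.Re L - c)%:C :> C by rewrite ltcR subr_gt0.
move/cvgrPdist_lt: gL => /(_ _ e0) /filter_ex [i Hi].
have H := normc_ge_Re (L - g i).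
have : `|complex.Re (L - g i)|%:C < (complex.Re L - c)%:C :> C by apply: le_lt_trans Hi.
rewrite ltcR => H2.
have : complex.Re (L - g i) = complex.Re L - complex.Re (g i) by case: (L) => ? ?; case: (g i).
move=> E; rewrite E in H2.
have := le_lt_trans (ler_norm _) H2; rewrite ltrBlDl addrC -ltrBlDl opprB addrC addrNK.
by rewrite ltNge gc.
Qed.
End LimUniq.

Lemma eval_cont (U : Type) (V : topologicalType) (u : U) :
  continuous (fun g : {ptws U -> V} => g u).
Proof.
move=> g; have /cvg_sup/(_ u) H : (g : {ptws U -> V}) --> g by apply: cvg_id.
have K := (@initial_continuous _ V (fun f : U -> V => f u) g).
by move=> B /K /H.
Qed.

Section DualFacts.
Variables (R : realType) (X : normedModType R[i]).
Local Notation C := R[i].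
Lemma dual_lin (f : dual X) k x y : sval f (k *: x + y) = k * sval f x + sval f y.
Proof. by case: (svalP f) => H _; apply: H. Qed.
Lemma dual0 (f : dual X) : sval f 0 = 0.
Proof.
have := dual_lin f 1 0 0; rewrite scaler0 addr0 mul1r => E.
by apply: (@addrI _ (sval f 0)); rewrite addr0 -E.
Qed.
Lemma dualZ (f : dual X) k x : sval f (k *: x) = k * sval f x.
Proof. by rewrite -[k *: x]addr0 dual_lin dual0 addr0. Qed.
Lemma dualD (f : dual X) x y : sval f (x + y) = sval f x + sval f y.
Proof. by rewrite -[x]scale1r dual_lin mul1r scale1r. Qed.
Lemma dualB (f : dual X) x y : sval f (x - y) = sval f x - sval f y.
Proof. by rewrite dualD -scaleN1r dualZ mulN1r. Qed.
Lemma dual_cont (f : dual X) : continuous (sval f).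
Proof. by case: (svalP f). Qed.
Lemma dual_weak_cont (f : dual X) : continuous (sval f : weakT X -> C^o).
Proof.
move=> z.
have H := @initial_continuous _ _ (@weak_eval R X) z.
have K := @eval_cont (dual X) C^o f (@weak_eval R X z).
by move=> B /K /H.
Qed.
End DualFacts.

Section Main.
Variables (R : realType) (A : completeNormedModType R[i]) (mul : A -> A -> A)
  (X : completeNormedModType R[i]) (phi : A -> X -> X).
Local Notation C := R[i].
Hypothesis hrep : representation mul phi.
Hypothesis hwc : forall x : X, weakly_compact_op (fun a : A => phi a x).
Variables (I : Type) (le : I -> I -> Prop) (e : I -> A) (M : C).
Hypothesis iI : inhabited I.
Hypothesis le_refl : forall i, le i i.
Hypothesis le_trans' : forall i j k, le i j -> le j k -> le i k.
Hypothesis le_dir : forall i j, exists k, le i k /\ le j k.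
Hypothesis ebound : forall i, `|e i| <= M.
Hypothesis eapprox : forall a (eps : C), 0 < eps ->
  exists i0, forall i, le i0 i -> `|mul (e i) a - a| < eps.

Lemma phiL a k x y : phi a (k *: x + y) = k *: phi a x + phi a y.
Proof. by case: hrep => H _ _ _; apply: H. Qed.
Lemma phiA k a b x : phi (k *: a + b) x = k *: phi a x + phi b x.
Proof. by case: hrep => _ H _ _; apply: H. Qed.
Lemma phiM a b x : phi (mul a b) x = phi a (phi b x).
Proof. by case: hrep => _ _ H _; apply: H. Qed.
Lemma phi0x a : phi a 0 = 0.
Proof.
have := phiL a 1 0 0; rewrite scaler0 addr0 scale1r => E.
by apply: (@addrI _ (phi a 0)); rewrite addr0 -E.
Qed.
Lemma phiZx a k x : phi a (k *: x) = k *: phi a x.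
Proof. by rewrite -[k *: x]addr0 phiL phi0x addr0. Qed.
Lemma phiDx a x y : phi a (x + y) = phi a x + phi a y.
Proof. by rewrite -[x]scale1r phiL !scale1r. Qed.
Lemma phiBx a x y : phi a (x - y) = phi a x - phi a y.
Proof. by rewrite phiDx -scaleN1r phiZx scaleN1r. Qed.
Lemma phi0a x : phi 0 x = 0.
Proof.
have := phiA 1 0 0 x; rewrite scaler0 addr0 scale1r => E.
by apply: (@addrI _ (phi 0 x)); rewrite addr0 -E.
Qed.
Lemma phiZa k a x : phi (k *: a) x = k *: phi a x.
Proof. by rewrite -[k *: a]addr0 phiA phi0a addr0. Qed.
Lemma phiBa a b x : phi (a - b) x = phi a x - phi b x.
Proof. by rewrite -scaleN1r addrC phiA scaleN1r addrC. Qed.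

Lemma Mr_ex : exists Mr : R, 0 <= Mr /\
  forall a x, nr (phi a x) <= Mr * nr a * nr x.
Proof.
case: hrep => _ _ _ [Mp HM].
have EM : (complex.Re `|Mp|)%:C = `|Mp| by rewrite RRe_real // normr_real.
exists (complex.Re `|Mp|); split; first by rewrite -ler0c EM.
move=> a x; rewrite -lecR !rcM -!normE EM.
have H := HM a x.
have w0 : 0 <= Mp * `|a| * `|x| by apply: le_trans H.
apply: (le_trans H); rewrite -[X in X <= _](ger0_norm w0) !normrM !normr_id.
exact: lexx.
Qed.


Definition E0 := lin_span [set phi a x | a in [set: A] & x in [set: X]].

Lemma E0_phi a x : E0 (phi a x).
Proof.
exists 1%N, (fun _ => 1), (fun _ => phi a x); split.
  by move=> _; exists a => //; exists x.
by rewrite big_ord1 scale1r.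
Qed.

Lemma E0_0 : E0 0.
Proof. by exists 0%N, (fun _ => 0), (fun _ => 0); split => [[]//|]; rewrite big_ord0. Qed.

Lemma E0_lin (k : C) x y : E0 x -> E0 y -> E0 (k *: x + y).
Proof.
move=> [n [c [v [Hv ->]]]] [m [c' [v' [Hv' ->]]]].
exists (n + m)%N.
exists (fun i => match fintype.split i with inl j => k * c j | inr j => c' j end).
exists (fun i => match fintype.split i with inl j => v j | inr j => v' j end).
split.
  by move=> i; case: (fintype.split i) => j.
rewrite big_split_ord /=; congr (_ + _).
  rewrite scaler_sumr; apply: eq_bigr => j _.
  by rewrite (unsplitK (inl j)) scalerA.
by apply: eq_bigr => j _; rewrite (unsplitK (inr j)).
Qed.

Definition Ft := filter_from [set: I] (fun i0 => [set i | le i0 i]).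

#[local] Instance Ft_proper : ProperFilter Ft.
Proof.
apply: filter_from_proper; last by move=> i _; exists i.
apply: filter_fromT_filter; first by case: iI => i; exists i.
move=> i j; have [k [ik jk]] := le_dir i j; exists k => l kl; split.
  exact: le_trans' ik kl.
exact: le_trans' jk kl.
Qed.

Variables (Mr M' : R).
Hypothesis Mr0 : 0 <= Mr.
Hypothesis hMr : forall a x, nr (phi a x) <= Mr * nr a * nr x.
Hypothesis M'0 : 0 < M'.
Hypothesis eb' : forall i, nr (e i) <= M'.

Lemma conv_basic a x : (fun i => phi (e i) (phi a x)) @ Ft --> phi a x.
Proof.
apply/cvgrPdist_lt => eps eps0.
have [epsE epsr] := real_pos eps0.
set er := complex.Re eps in epsE epsr.
pose K := Mr * nr x + 1.
have K0 : 0 < K by rewrite /K ltr_wpDl // mulr_ge0 // nr_ge0.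
have d0 : 0 < (er / K)%:C :> C by rewrite ltcR divr_gt0.
have [i0 Hi0] := eapprox a d0.
exists i0 => // i /Hi0; rewrite normE ltcR => Hi.
rewrite -phiM -phiBa epsE normE ltcR.
apply: le_lt_trans (hMr _ _) _.
rewrite -opprB nrN mulrAC.
have -> : er = K * (er / K) by rewrite mulrC divfK // gt_eqF.
apply: (@le_lt_trans _ _ (Mr * nr x * (er / K))).
  by rewrite ler_wpM2l // ?mulr_ge0 ?nr_ge0 // ltW.
by rewrite ltr_pM2r ?divr_gt0 // /K ltrDl.
Qed.

Lemma conv_sum n (c : 'I_n -> C) (v : 'I_n -> X) :
  (forall j, (fun i => phi (e i) (v j)) @ Ft --> v j) ->
  (fun i => phi (e i) (\sum_(j < n) c j *: v j)) @ Ft --> \sum_(j < n) c j *: v j.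
Proof.
elim: n c v => [|n IH] c v H.
  rewrite big_ord0.
  have -> : (fun i => phi (e i) 0) = (fun _ => 0) by apply: funext => i; rewrite phi0x.
  exact: cvg_cst.
rewrite big_ord_recr /=.
have -> : (fun i => phi (e i) (\sum_(j < n) c (widen_ord (leqnSn n) j) *: v (widen_ord (leqnSn n) j) + c ord_max *: v ord_max))
  = (fun i => phi (e i) (\sum_(j < n) c (widen_ord (leqnSn n) j) *: v (widen_ord (leqnSn n) j)) + c ord_max *: phi (e i) (v ord_max)).
  by apply: funext => i; rewrite phiDx phiZx.
apply: cvgD; first by apply: IH => j; exact: H.
by apply: cvgZl_tmp; exact: H.
Qed.

Lemma conv_E0 y : E0 y -> (fun i => phi (e i) y) @ Ft --> y.
Proof.
move=> [n [c [v [Hv ->]]]]; apply: conv_sum => j.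
have [a _ [x _ <-]] := Hv j; exact: conv_basic.
Qed.

Lemma conv_E y : closure E0 y -> (fun i => phi (e i) y) @ Ft --> y.
Proof.
move=> Hy; apply/cvgrPdist_lt => eps eps0.
have [epsE epsr] := real_pos eps0.
set er := complex.Re eps in epsE epsr.
pose K := 1 + Mr * M'.
have K0 : 0 < K by rewrite /K ltr_pwDl // mulr_ge0 // ltW.
pose d := er / 2 / K.
have d0 : 0 < d by rewrite /d !divr_gt0.
have [y0 [Ey0 By0]] : exists y0, E0 y0 /\ nr (y - y0) < d.
  have : nbhs y [set z | `|y - z| < d%:C].
    by apply/nbhs_normP; exists d%:C; [rewrite /= ltcR | move=> z; exact].
  move=> /Hy [y0 [H1 H2]]; exists y0; split => //.
  by move: H2; rewrite /= normE ltcR.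
have h0 : 0 < (er / 2)%:C :> C by rewrite ltcR divr_gt0.
have := conv_E0 Ey0; move/cvgrPdist_lt => /(_ _ h0).
apply: filterS => i; rewrite normE ltcR => Hi.
rewrite epsE normE ltcR.
have -> : y - phi (e i) y = (y - y0) + (y0 - phi (e i) y0) + phi (e i) (y0 - y).
  by rewrite phiBx !addrA !addrNK.
apply: le_lt_trans (nrD _ _) _.
apply: (@le_lt_trans _ _ (nr (y - y0) + nr (y0 - phi (e i) y0) + Mr * M' * nr (y - y0))).
  rewrite lerD ?nrD //; apply: le_trans (hMr _ _) _.
  by rewrite -opprB nrN ler_wpM2r ?nr_ge0 // ler_wpM2l.
have H3 : Mr * M' * nr (y - y0) <= Mr * M' * d.
  by rewrite ler_wpM2l ?mulr_ge0 // ltW.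
have H4 : d + Mr * M' * d = er / 2.
  by rewrite -{1}[d]mul1r -mulrDl -/K /d mulrC divfK // gt_eqF.
have H5 : er / 2 + er / 2 = er by rewrite -splitr.
lra.
Qed.

Definition e' i := (M'^-1)%:C *: e i.
Definition h x i := phi (e' i) x.

Lemma e'_ball i : `|e' i| <= 1.
Proof.
rewrite /e' normrZ normC_real normE -rcM.
have -> : (1 : C) = (M'^-1 * M')%:C by rewrite mulVf ?gt_eqF.
rewrite lecR ger0_norm; last by rewrite invr_ge0 ltW.
by rewrite ler_wpM2l // invr_ge0 ltW.
Qed.

Variables (U : set_system I).
Hypothesis UU : UltraFilter U.
Hypothesis FtU : Ft `<=` U.

Definition Lim x z := forall f : dual X,
  (fun i => sval f (h x i)) @ U --> (sval f z : C^o).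

Lemma Lim_ex x : exists z, Lim x z.
Proof.
have K := @hwc x; rewrite /weakly_compact_op /rel_weakly_compact in K.
pose F := (fun i => (h x i : weakT X)) @ U.
have PF : ProperFilter F by apply: fmap_proper_filter; exact: ultra_proper.
have FK : F (@closure (weakT X) ((fun a => phi a x) @` [set v : A | `|v| <= 1])).
  suff H : U [set i : I | @closure (weakT X) ((fun a => phi a x) @` [set v : A | `|v| <= 1]) (h x i)] by exact: H.
  apply: filterS filterT => i _; apply: subset_closure.
  by exists (e' i) => //; exact: e'_ball.
have [z [_ cz]] := K F PF FK.
exists z => f B Bz.
have nb : @nbhs _ (weakT X) z (fun w => B (sval f w)) := dual_weak_cont Bz.
case: (in_ultra_setVsetC (fun i => B (sval f (h x i))) UU) => // Hc.
exfalso; have [w [Hw1 Hw2]] := cz (~` (fun w => B (sval f w))) _ Hc nb.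
by apply: Hw1.
Qed.

#[local] Instance U_proper : ProperFilter U.
Proof. exact: ultra_proper. Qed.

Lemma Lim_uniq x z1 z2 : Lim x z1 -> Lim x z2 -> z1 = z2.
Proof.
move=> H1 H2; apply/eqP; rewrite -subr_eq0; apply: contraT => nz.
have [f fnz] := separate nz.
have := lim_uniqC U_proper (H1 f) (H2 f).
by move=> E; move: fnz; rewrite dualB E subrr eqxx.
Qed.

Definition Q x := xget 0 (Lim x).
Lemma QP x : Lim x (Q x).
Proof. exact: xgetPex (Lim_ex x). Qed.

Lemma Q_lin k x y : Q (k *: x + y) = k *: Q x + Q y.
Proof.
apply: (Lim_uniq (@QP (k *: x + y))) => f.
have -> : (fun i => sval f (h (k *: x + y) i)) =
          (fun i => k * sval f (h x i) + sval f (h y i)).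
  by apply: funext => i; rewrite /h phiL dual_lin.
rewrite dual_lin; apply: cvgD; last exact: (@QP y f).
by apply: cvgMl_tmp; exact: (@QP x f).
Qed.

Lemma Q_bound x : nr (Q x) <= Mr * nr x.
Proof.
have [f [fQ fle]] := norming (Q x); rewrite -fQ.
apply: (lim_Re_le U_proper (@QP x f)) => i.
apply: le_trans (fle _) _; rewrite /h; apply: le_trans (hMr _ _) _.
rewrite ler_wpM2r ?nr_ge0 //.
have : nr (e' i) <= 1 by rewrite -lecR -normE; exact: e'_ball.
by move=> H; rewrite -[leRHS]mulr1 ler_wpM2l.
Qed.

Lemma Q_van x (f : dual X) : (forall y, E0 y -> sval f y = 0) -> sval f (Q x) = 0.
Proof.
move=> fv.
have H0 : (fun i => sval f (h x i)) @ U --> (0 : C^o).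
  have -> : (fun i => sval f (h x i)) = (fun _ => 0 : C^o).
    by apply: funext => i; rewrite fv //; exact: E0_phi.
  exact: cvg_cst.
by have := lim_uniqC U_proper (@QP x f) H0.
Qed.

Lemma Q_E y : closure E0 y -> Q y = (M'^-1)%:C *: y.
Proof.
move=> Hy; apply: esym; apply: (Lim_uniq _ (@QP y)) => f.
have -> : (fun i => sval f (h y i)) = (fun i => (M'^-1)%:C * sval f (phi (e i) y)).
  by apply: funext => i; rewrite /h /e' phiZa dualZ.
rewrite dualZ; apply: cvgMl_tmp.
move=> B HB; have := @dual_cont R X f y B HB; move=> /(conv_E Hy); exact: FtU.
Qed.

Lemma Q_inE x : closure E0 (M'%:C *: Q x).
Proof.
apply: contrapT => ncl.
have [f [fv fnz]] := separate_sub E0_0 E0_lin ncl.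
by move: fnz; rewrite dualZ Q_van // mulr0 eqxx.
Qed.

Definition P x := M'%:C *: Q x.

Lemma P_complemented : complemented (essential_space phi).
Proof.
have QE : forall y, closure E0 y -> P y = y.
  by move=> y Hy; rewrite /P Q_E // scalerA -rcM divff ?gt_eqF // scale1r.
exists P; split.
- by move=> k x y; rewrite /P Q_lin scalerDr !scalerA mulrC.
- exists (M' * Mr)%:C => x; rewrite /P normrZ normC_real ger0_norm; last exact: ltW.
  rewrite !normE -!rcM lecR -mulrA; apply: ler_wpM2l; [exact: ltW | exact: Q_bound].
- move=> x; rewrite QE //; exact: Q_inE.
- apply/seteqP; split => y.
    by move=> [x _ <-]; exact: Q_inE.
  by move=> Hy; exists y => //; exact: QE.
Qed.
End Main.

Theorem theoremB (R : realType) (A : completeNormedModType R[i]) (mul : A -> A -> A)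
  (X : completeNormedModType R[i]) (phi : A -> X -> X) :
  banach_algebra_mul mul ->
  has_blai mul ->
  representation mul phi ->
  (forall x : X, weakly_compact_op (fun a : A => phi a x)) ->
  complemented (essential_space phi).
Proof.
move=> _ [I [le [e [M [iI [lr [lt [ld [eb ea]]]]]]]]] hrep hwc.
have [Mr [Mr0 hMr]] := Mr_ex hrep.
have [i0] := iI.
have M0 : 0 <= M := le_trans (normr_ge0 (e i0)) (eb i0).
have MR : M = (complex.Re M)%:C by rewrite RRe_real // ger0_real.
have Mre0 : 0 <= complex.Re M by rewrite -ler0c -MR.
have M'0 : 0 < complex.Re M + 1 by rewrite ltr_wpDl.
have eb' : forall i, nr (e i) <= complex.Re M + 1.
  move=> i; apply: (@le_trans _ _ (complex.Re M)); last by rewrite lerDl.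
  rewrite -lecR -normE -MR; exact: eb.
have [U [UU FtU]] := ultraFilterLemma (Ft_proper iI lr lt ld).
exact: (@P_complemented R A mul X phi hrep hwc I le e iI lr lt ld ea Mr _ Mr0 hMr M'0 eb' U UU FtU).
Qed.
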